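(* Let $f,g$ satisfy the standing assumptions below and suppose $\beta\ge\frac{2M_fQ_g}{\mu^3}$. Then for any $(x,y)\in\mathbb{R}^n\times\mathbb{R}^p$, $0\in\mathcal{D}_h(x,y)$ if and only if $0\in\hat{\mathcal{D}}_p(x,y)$.
   Context: Standing assumptions. (A1) Constants $M_f,\mu,L_g,Q_g>0$ exist such that: $f:\mathbb{R}^n\times\mathbb{R}^p\to\mathbb{R}$ is $M_f$-Lipschitz; $g$ is twice differentiable with $\nabla^2_{yy}g\succeq\mu I_p$; $\nabla g$ is $L_g$-Lipschitz; $\nabla^2_{yy}g,\nabla^2_{xy}g$ are $Q_g$-Lipschitz; $\nabla^2_{yy}g$ is continuously differentiable ($\nabla^2_{xy}g\in\mathbb{R}^{n\times p}$ has entries $\partial^2g/\partial x_i\partial y_j$). (A2) $f$ is a potential function of a conservative field $\mathcal{D}_f$ with compact convex values of norm at most $M_f$. Notation (all at $(x,y)$): $H=\nabla^2_{yy}g$; $\mathcal{A}(x,y):=y-H^{-1}\nabla_yg$; $\nabla^3_{xyy}g(x,y)[d]:=\lim_{t\to0}\frac1t(\nabla^2_{xy}g(x,y+td)-\nabla^2_{xy}g(x,y))$, $\nabla^3_{yyy}g(x,y)[d]:=\lim_{t\to0}\frac1t(\nabla^2_{yy}g(x,y+td)-\nabla^2_{yy}g(x,y))$; $J_{A,x}:=-\nabla^2_{xy}gH^{-1}+\nabla^3_{xyy}g[H^{-1}\nabla_yg]H^{-1}$, $J_{A,y}:=\nabla^3_{yyy}g[H^{-1}\nabla_yg]H^{-1}$;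 $\mathcal{D}_h(x,y):=\{(d_x+J_{A,x}d_y+\beta\nabla^2_{xy}g\nabla_yg,\ J_{A,y}d_y+\beta H\nabla_yg):(d_x,d_y)\in\mathcal{D}_f(x,\mathcal{A}(x,y))\}$; $W(x,y):=[I_n,\ -\nabla^2_{xy}g(x,y)H^{-1}]\in\mathbb{R}^{n\times(n+p)}$; $\hat{\mathcal{D}}_p(x,y):=\{W(x,y)^\top W(x,y)d+(0,\beta\nabla_yg(x,y)):d\in\mathcal{D}_f(x,\mathcal{A}(x,y))\}$. *)

(* Defs.v *)
From HB Require Import structures.
From mathcomp Require Import all_boot all_order all_algebra.
From mathcomp Require Import all_classical all_reals all_analysis.
Set Implicit Arguments. Unset Strict Implicit. Unset Printing Implicit Defensive.
Import Order.TTheory GRing.Theory Num.Theory.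
Import numFieldNormedType.Exports.
Local Open Scope classical_set_scope.
Local Open Scope ring_scope.

Section Defs.
Variable R : realType.

Definition inner (m : nat) (u v : 'cV[R]_m) : R := \sum_i u i 0 * v i 0.
Definition enorm (m : nat) (v : 'cV[R]_m) : R := Num.sqrt (inner v v).

Definition evec (m : nat) (k : 'I_m) : 'cV[R]_m := delta_mx k 0.

(* a point (x,y) of R^n x R^p is the column vector col_mx x y : 'cV_(n+p) *)

Definition grad (m : nat) (g : 'cV[R]_m -> R) (z : 'cV[R]_m) : 'cV[R]_m :=
  \col_k ('D_(evec k) g z).

Definition hess (m : nat) (g : 'cV[R]_m -> R) (z : 'cV[R]_m) : 'M[R]_m :=
  \matrix_(k, l) ('D_(evec k) (fun w => grad g w l 0) z).

Variables n p : nat.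
Implicit Types (g : 'cV[R]_(n + p) -> R) (x : 'cV[R]_n) (y : 'cV[R]_p).

Definition grad_y g x y : 'cV[R]_p := dsubmx (grad g (col_mx x y)).
Definition hess_yy g (z : 'cV[R]_(n + p)) : 'M[R]_p := drsubmx (hess g z).
Definition hess_xy g (z : 'cV[R]_(n + p)) : 'M[R]_(n, p) := ursubmx (hess g z).

Definition D3_xyy g x y (d : 'cV[R]_p) : 'M[R]_(n, p) :=
  'D_(col_mx 0 d) (hess_xy g) (col_mx x y).
Definition D3_yyy g x y (d : 'cV[R]_p) : 'M[R]_p :=
  'D_(col_mx 0 d) (hess_yy g) (col_mx x y).

Definition Hinv g x y : 'M[R]_p := invmx (hess_yy g (col_mx x y)).

Definition Amap g x y : 'cV[R]_p := y - Hinv g x y *m grad_y g x y.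

Definition J_Ax g x y : 'M[R]_(n, p) :=
  - (hess_xy g (col_mx x y) *m Hinv g x y)
  + D3_xyy g x y (Hinv g x y *m grad_y g x y) *m Hinv g x y.
Definition J_Ay g x y : 'M[R]_p :=
  D3_yyy g x y (Hinv g x y *m grad_y g x y) *m Hinv g x y.

Definition D_h (Df : 'cV[R]_(n + p) -> set 'cV[R]_(n + p)) g (beta : R) x y
  : set 'cV[R]_(n + p) :=
  [set col_mx
        (usubmx d + J_Ax g x y *m dsubmx d
           + beta *: (hess_xy g (col_mx x y) *m grad_y g x y))
        (J_Ay g x y *m dsubmx d
           + beta *: (hess_yy g (col_mx x y) *m grad_y g x y))
   | d in Df (col_mx x (Amap g x y))].

Definition Wmat g x y : 'M[R]_(n, n + p) :=
  row_mx 1%:M (- (hess_xy g (col_mx x y) *m Hinv g x y)).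

Definition D_p_hat (Df : 'cV[R]_(n + p) -> set 'cV[R]_(n + p)) g (beta : R) x y
  : set 'cV[R]_(n + p) :=
  [set (Wmat g x y)^T *m (Wmat g x y *m d) + col_mx 0 (beta *: grad_y g x y)
   | d in Df (col_mx x (Amap g x y))].

End Defs.

Section Regularity.
Variable R : realType.

Definition lipschitz_with (m : nat) (L : R) (F : 'cV[R]_m -> R) :=
  forall z z', `|F z - F z'| <= L * enorm (z - z').

Definition lipschitz_vec_with (m k : nat) (L : R) (F : 'cV[R]_m -> 'cV[R]_k) :=
  forall z z', enorm (F z - F z') <= L * enorm (z - z').

(* Lipschitz continuity of a matrix-valued map w.r.t. the operator (spectral)
   norm:  ||F z - F z'||_op <= L |z - z'|, written out via the definition of the
   operator norm. *)
Definition lipschitz_mx_with (m a b : nat) (L : R) (F : 'cV[R]_m -> 'M[R]_(a, b)) :=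
  forall z z' (v : 'cV[R]_b),
    enorm ((F z - F z') *m v) <= L * enorm (z - z') * enorm v.

Definition psd_ge (k : nat) (M : 'M[R]_k) (mu : R) :=
  forall v : 'cV[R]_k, inner v (M *m v) >= mu * inner v v.

Definition abs_cont_curve (m : nat) (gamma : R -> 'cV[R]_m) :=
  forall eps : R, 0 < eps -> exists2 delta : R, 0 < delta &
    forall (K : nat) (a b : 'I_K -> R),
      (forall i, 0 <= a i /\ a i <= b i /\ b i <= 1) ->
      (forall i j, i != j -> b i <= a j \/ b j <= a i) ->
      \sum_i (b i - a i) < delta ->
      \sum_i enorm (gamma (b i) - gamma (a i)) < eps.

Local Open Scope ereal_scope.
Definition max_pairing (m : nat) (D : 'cV[R]_m -> set 'cV[R]_m)
  (gamma : R -> 'cV[R]_m) (t : R) : \bar R :=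
  ereal_sup [set (inner (derive1 gamma t) v)%:E | v in D (gamma t)].
Local Close Scope ereal_scope.

(* conservative field (Bolte--Pauwels): closed graph, nonempty compact values,
   and the integral of max_pairing along every absolutely continuous loop is 0 *)
Definition conservative_field (m : nat) (D : 'cV[R]_m -> set 'cV[R]_m) :=
  [/\ closed [set zv : 'cV[R]_m * 'cV[R]_m | D zv.1 zv.2],
      (forall z, D z !=set0),
      (forall z, compact (D z)) &
      (forall gamma : R -> 'cV[R]_m, abs_cont_curve gamma -> gamma 0 = gamma 1 ->
         (\int[lebesgue_measure]_(t in `[0%R, 1%R]) max_pairing D gamma t = 0)%E)].

Definition potential_of (m : nat) (f : 'cV[R]_m -> R) (D : 'cV[R]_m -> set 'cV[R]_m) :=
  forall gamma : R -> 'cV[R]_m, abs_cont_curve gamma ->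
    ((f (gamma 1) - f (gamma 0))%:E =
       \int[lebesgue_measure]_(t in `[0%R, 1%R]) max_pairing D gamma t)%E.

End Regularity.

(* Main.v *)
Set Warnings "-notation-overridden -ambiguous-paths -notation-incompatible-prefix".
Require Import Defs.
From HB Require Import structures.
From mathcomp Require Import all_boot all_order all_algebra.
From mathcomp Require Import all_classical all_reals all_analysis.
From mathcomp Require Import ring lra.
Set Implicit Arguments. Unset Strict Implicit.
Import Order.TTheory GRing.Theory Num.Theory.
Import numFieldNormedType.Exports.
Local Open Scope classical_set_scope.
Local Open Scope ring_scope.

Lemma innerE (R : realType) m (u v : 'cV[R]_m) : inner u v = (u^T *m v) 0 0.
Proof. by rewrite /inner !mxE; apply: eq_bigr => i _; rewrite mxE. Qed.

Lemma inner_ge0 (R : realType) m (u : 'cV[R]_m) : 0 <= inner u u.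
Proof. by rewrite /inner; apply: sumr_ge0 => i _; rewrite -expr2 sqr_ge0. Qed.


Lemma inner_eq0 (R : realType) m (u : 'cV[R]_m) : inner u u = 0 -> u = 0.
Proof.
rewrite /inner => /psumr_eq0P H; apply/matrixP => i j.
have H0 : forall k : 'I_m, true -> 0 <= u k 0 * u k 0 by move=> k _; rewrite -expr2 sqr_ge0.
have := H H0 i isT.
by move/eqP; rewrite mulf_eq0 orbb (ord1 j) mxE => /eqP.
Qed.

Lemma innerZ (R : realType) m (a : R) (u : 'cV[R]_m) :
  inner (a *: u) (a *: u) = a ^+ 2 * inner u u.
Proof. rewrite /inner mulr_sumr; apply: eq_bigr => i _; rewrite !mxE; ring. Qed.

Lemma enormE (R : realType) m (u : 'cV[R]_m) : enorm u ^+ 2 = inner u u.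
Proof. by rewrite /enorm sqr_sqrtr // inner_ge0. Qed.

Lemma enorm_ge0 (R : realType) m (u : 'cV[R]_m) : 0 <= enorm u.
Proof. exact: sqrtr_ge0. Qed.

Lemma enormZ (R : realType) m (a : R) (u : 'cV[R]_m) : enorm (a *: u) = `|a| * enorm u.
Proof. by rewrite /enorm innerZ sqrtrM ?sqr_ge0 // sqrtr_sqr. Qed.

Lemma inner_split (R : realType) n p (d : 'cV[R]_(n + p)) :
  inner d d = inner (usubmx d) (usubmx d) + inner (dsubmx d) (dsubmx d).
Proof. by rewrite /inner big_split_ord; congr (_ + _); apply: eq_bigr => i _; rewrite !mxE. Qed.

Lemma inner_col0 (R : realType) n p (t : 'cV[R]_p) :
  inner (col_mx (0 : 'cV[R]_n) t) (col_mx 0 t) = inner t t.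
Proof. by rewrite inner_split col_mxKu col_mxKd /inner big1 ?add0r // => i _; rewrite mxE mul0r. Qed.

Lemma inner_quad (R : realType) m (c : R) (v w : 'cV[R]_m) :
  2 * c * inner v w <= c ^+ 2 * inner v v + inner w w.
Proof.
have := inner_ge0 (c *: v - w : 'cV[R]_m).
have -> : inner (c *: v - w) (c *: v - w) = c ^+ 2 * inner v v - 2 * c * inner v w + inner w w.
  rewrite /inner !mulr_sumr -sumrB -big_split /=; apply: eq_bigr => i _; rewrite !mxE; ring.
lra.
Qed.

Lemma psd_sq (R : realType) m (H : 'M[R]_m) mu (v : 'cV[R]_m) :
  0 < mu -> psd_ge H mu -> mu ^+ 2 * inner v v <= inner (H *m v) (H *m v).
Proof.
move=> mu0 /(_ v) Hp; have := inner_quad mu v (H *m v).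
have := inner_ge0 v; nra.
Qed.

Lemma psd_unit (R : realType) m (H : 'M[R]_m) mu :
  0 < mu -> psd_ge H mu -> H \in unitmx.
Proof.
move=> mu0 Hp; rewrite unitmxE unitfE; apply/negP => /det0P [u u0 uH].
have := Hp u^T; rewrite [inner _ (H *m _)]innerE trmxK mulmxA uH mul0mx mxE => h.
have : inner u^T u^T = 0 by have := inner_ge0 u^T; nra.
move/inner_eq0 => /(congr1 trmx); rewrite trmxK trmx0 => u00.
by rewrite u00 eqxx in u0.
Qed.

Lemma cvg_big_sum (R : realType) T (F : set_system T) {FF : Filter F} (I : Type)
  (r : seq I) (f : I -> T -> R) (l : I -> R) :
  (forall i, f i @ F --> l i) -> (fun x => \sum_(i <- r) f i x) @ F --> \sum_(i <- r) l i.
Proof.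
move=> H; elim: r => [|i r IH].
  have -> : (fun x => \sum_(i <- [::]) f i x) = fun=> 0 by apply/funext => x; rewrite big_nil.
  rewrite big_nil; exact: cvg_cst.
have -> : (fun x => \sum_(j <- i :: r) f j x) = (fun x => f i x + \sum_(j <- r) f j x).
  by apply/funext => x; rewrite big_cons.
rewrite big_cons; exact: cvgD.
Qed.

Lemma psi_cvg (R : realType) T (G : set_system T) {FG : Filter G} a b
  (phi : T -> 'M[R]_(a,b)) (D : 'M[R]_(a,b)) (u : 'cV[R]_b) :
  phi @ G --> D -> (fun t => inner (phi t *m u) (phi t *m u)) @ G --> inner (D *m u) (D *m u).
Proof.
move=> HD.
have Hij : forall i j, (fun t => phi t i j) @ G --> D i j.
  move=> i j; have HC := @coord_continuous R a b i j D.
  exact: (@cvg_comp _ _ _ phi (fun M : 'M[R]_(a,b) => M i j) G _ _ HD HC).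
have Hi : forall i, (fun t => (phi t *m u) i 0) @ G --> (D *m u) i 0.
  move=> i; rewrite mxE.
  have -> : (fun t => (phi t *m u) i 0) = (fun t => \sum_j phi t i j * u j 0).
    by apply/funext => t; rewrite mxE.
  apply: (cvg_big_sum (f := fun j t => phi t i j * u j 0)) => j; exact: cvgMr_tmp.
rewrite /inner; apply: (cvg_big_sum (f := fun i t => (phi t *m u) i 0 * (phi t *m u) i 0)) => i.
exact: cvgM.
Qed.

Lemma D_bound (R : realType) m a b (F : 'cV[R]_m -> 'M[R]_(a,b)) (Q : R) z v (u : 'cV[R]_b) :
  lipschitz_mx_with Q F -> derivable F z v ->
  inner ('D_v F z *m u) ('D_v F z *m u) <= (Q * enorm v * enorm u) ^+ 2.
Proof.
move=> HL Hd.
set phi := (fun h : R => h^-1 *: ((F \o shift z) (h *: v) - F z)).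
have Hphi : phi @ 0^' --> 'D_v F z by exact: Hd.
have Hpsi : (fun t => inner (phi t *m u) (phi t *m u)) @ 0^' --> inner ('D_v F z *m u) ('D_v F z *m u) by exact: psi_cvg.
rewrite -(cvg_lim _ Hpsi) //.
apply: limr_le; first by apply/cvg_ex; eexists; exact: Hpsi.
near=> h.
have h0 : h != 0 by near: h; exact: nbhs_dnbhs_neq.
rewrite /phi /= -scalemxAl innerZ -enormE.
have := HL (h *: v + z) z u.
rewrite addrK enormZ => Hb.
have e0 := enorm_ge0 ((F (h *: v + z) - F z) *m u).
have H2 : enorm ((F (h *: v + z) - F z) *m u) ^+ 2 <= (Q * (`|h| * enorm v) * enorm u) ^+ 2.
  by rewrite !expr2; apply: ler_pM => //; apply: le_trans Hb.
have hh : `|h| ^+ 2 = h ^+ 2 by rewrite real_normK // num_real.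
have -> : (Q * enorm v * enorm u) ^+ 2 = h^-1 ^+ 2 * (Q * (`|h| * enorm v) * enorm u) ^+ 2.
  rewrite !exprMn hh; field; exact: h0.
by apply: ler_wpM2l => //; rewrite sqr_ge0.
Unshelve. all: by end_near.
Qed.

Lemma J_zero (R : realType) n p (g : 'cV[R]_(n + p) -> R) x y :
  grad_y g x y = 0 ->
  J_Ax g x y = - (hess_xy g (col_mx x y) *m Hinv g x y) /\ J_Ay g x y = 0.
Proof.
move=> r0; rewrite /J_Ax /J_Ay /D3_xyy /D3_yyy r0 mulmx0 col_mx0 !derive0 !mul0mx addr0.
by split.
Qed.

Lemma W_mul (R : realType) n p (g : 'cV[R]_(n + p) -> R) x y (d : 'cV[R]_(n + p)) :
  Wmat g x y *m d = usubmx d - hess_xy g (col_mx x y) *m Hinv g x y *m dsubmx d.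
Proof. by rewrite -{1}(vsubmxK d) /Wmat mul_row_col mul1mx mulNmx. Qed.

Theorem proposition4p7 (R : realType) (n p : nat)
  (f g : 'cV[R]_(n + p) -> R) (Df : 'cV[R]_(n + p) -> set 'cV[R]_(n + p))
  (M_f mu L_g Q_g beta : R) :
  (* (A1) *)
  0 < M_f -> 0 < mu -> 0 < L_g -> 0 < Q_g ->
  lipschitz_with M_f f ->
  (forall z, differentiable g z) ->
  (forall z, differentiable (grad g) z) ->
  (forall z, psd_ge (hess_yy g z) mu) ->
  lipschitz_vec_with L_g (grad g) ->
  lipschitz_mx_with Q_g (hess_yy g) ->
  lipschitz_mx_with Q_g (hess_xy g) ->
  (forall z, differentiable (hess_yy g) z) ->
  (forall v : 'cV[R]_(n + p), continuous (fun z => 'D_v (hess_yy g) z)) ->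
  (* (A2) *)
  conservative_field Df ->
  potential_of f Df ->
  (forall z, convex_set (Df z : set (convex_lmodType 'cV[R]_(n + p)))) ->
  (forall z d, Df z d -> enorm d <= M_f) ->
  (* step size *)
  2 * M_f * Q_g / mu ^+ 3 <= beta ->
  forall (x : 'cV[R]_n) (y : 'cV[R]_p),
    D_h Df g beta x y 0 <-> D_p_hat Df g beta x y 0.
Proof.
move=> M0 mu0 L0 Q0 _ _ _ Hpsd _ HLyy _ Hdiff _ _ _ _ HM Hbeta x y.
have mu30 : 0 < mu ^+ 3 by rewrite exprn_gt0.
have beta0 : 0 < beta.
  apply: lt_le_trans Hbeta; rewrite divr_gt0 // mulr_gt0 // mulr_gt0 //.
have Hb3 : 2 * M_f * Q_g <= beta * mu ^+ 3 by rewrite -ler_pdivrMr.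
have Hunit : hess_yy g (col_mx x y) \in unitmx by exact: (psd_unit mu0 (Hpsd _)).
split.
- case=> d Dd E.
  have := E; rewrite -col_mx0 => /eq_col_mx [Et Eb].
  have r0 : grad_y g x y = 0.
    set H := hess_yy g (col_mx x y) in Eb Hunit.
    set r := grad_y g x y in Eb *.
    set t := Hinv g x y *m r.
    set s := Hinv g x y *m dsubmx d.
    have Eb' : D3_yyy g x y t *m s = - (beta *: (H *m r)).
      by apply/eqP; rewrite -addr_eq0; apply/eqP; rewrite /s mulmxA.
    have HT : mu ^+ 2 * inner t t <= inner r r.
      have := psd_sq t mu0 (Hpsd (col_mx x y)).
      by rewrite /t mulmxA mulmxV // mul1mx.
    have HS : mu ^+ 2 * inner s s <= M_f ^+ 2.
      have := psd_sq s mu0 (Hpsd (col_mx x y)).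
      rewrite /s mulmxA mulmxV // mul1mx => h1; apply: (le_trans h1).
      apply: le_trans (_ : inner d d <= _).
        by rewrite [X in _ <= X]inner_split lerDr inner_ge0.
      rewrite -enormE; have := HM _ _ Dd => h2.
      by rewrite !expr2; apply: ler_pM => //; exact: enorm_ge0.
    have HR : mu ^+ 2 * inner r r <= inner (H *m r) (H *m r).
      exact: psd_sq r mu0 (Hpsd (col_mx x y)).
    have HD : beta ^+ 2 * inner (H *m r) (H *m r) <= Q_g ^+ 2 * inner t t * inner s s.
      have Hder : derivable (hess_yy g) (col_mx x y) (col_mx 0 t) by apply: diff_derivable.
      have := D_bound s HLyy Hder.
      rewrite -/(D3_yyy g x y t) Eb' -scaleNr innerZ sqrrN.
      by rewrite !exprMn !enormE inner_col0.
    have A0 := inner_ge0 r; have T0 := inner_ge0 t; have S0 := inner_ge0 s.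
    have HHR0 := inner_ge0 (H *m r).
    set A := inner r r in HT HR A0 *.
    set T := inner t t in HT HD T0.
    set S := inner s s in HS HD S0.
    set B := inner (H *m r) (H *m r) in HR HD HHR0.
    have h1 : beta ^+ 2 * (mu ^+ 2 * A) <= Q_g ^+ 2 * T * S.
      apply: le_trans HD; apply: ler_wpM2l; [exact: sqr_ge0 | exact: HR].
    have h2 : mu ^+ 4 * (Q_g ^+ 2 * T * S) <= Q_g ^+ 2 * (A * M_f ^+ 2).
      have -> : mu ^+ 4 * (Q_g ^+ 2 * T * S) = Q_g ^+ 2 * ((mu ^+ 2 * T) * (mu ^+ 2 * S)).
        by ring.
      apply: ler_wpM2l; first exact: sqr_ge0.
      by apply: ler_pM => //; apply: mulr_ge0 => //; exact: sqr_ge0.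
    have h3 : (2 * M_f * Q_g) ^+ 2 <= (beta * mu ^+ 3) ^+ 2.
      by rewrite !expr2; apply: ler_pM => //; rewrite mulr_ge0 // ?mulr_ge0 // ltW.
    have h4 : (beta * mu ^+ 3) ^+ 2 * A <= Q_g ^+ 2 * M_f ^+ 2 * A.
      have : mu ^+ 4 * (beta ^+ 2 * (mu ^+ 2 * A)) <= mu ^+ 4 * (Q_g ^+ 2 * T * S).
        by apply: ler_wpM2l => //; rewrite exprn_ge0 // ltW.
      move=> h; have := le_trans h h2.
      have -> : mu ^+ 4 * (beta ^+ 2 * (mu ^+ 2 * A)) = (beta * mu ^+ 3) ^+ 2 * A by ring.
      by have -> : Q_g ^+ 2 * (A * M_f ^+ 2) = Q_g ^+ 2 * M_f ^+ 2 * A by ring.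
    have h5 : (2 * M_f * Q_g) ^+ 2 * A <= Q_g ^+ 2 * M_f ^+ 2 * A.
      apply: le_trans h4; exact: ler_wpM2r.
    have QM0 : 0 < Q_g ^+ 2 * M_f ^+ 2 by rewrite mulr_gt0 // exprn_gt0.
    have A00 : A = 0.
      apply/eqP; rewrite eq_le A0 andbT.
      have : 3 * (Q_g ^+ 2 * M_f ^+ 2) * A <= 0.
        move: h5.
        have -> : (2 * M_f * Q_g) ^+ 2 * A = 4 * (Q_g ^+ 2 * M_f ^+ 2) * A by ring.
        lra.
      by rewrite pmulr_rle0 // mulr_gt0.
    exact: inner_eq0.
  have [JA JY] := J_zero r0.
  exists d => //.
  have Wd : Wmat g x y *m d = 0.
    rewrite W_mul; move: Et; rewrite JA r0 mulmx0 scaler0 addr0 mulNmx.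
    by [].
  by rewrite Wd mulmx0 add0r r0 scaler0 col_mx0.
- case=> d Dd E.
  move: E; rewrite {1}/Wmat tr_row_mx mul_col_mx add_col_mx -col_mx0 => /eq_col_mx [E1 E2].
  move: E1; rewrite trmx1 mul1mx addr0 => Wd.
  move: E2; rewrite Wd mulmx0 add0r => /eqP; rewrite scaler_eq0 (gt_eqF beta0) /= => /eqP r0.
  have [JA JY] := J_zero r0.
  exists d => //.
  rewrite JA JY r0 mulmx0 scaler0 !addr0 mul0mx mulNmx -W_mul Wd.
  by rewrite mulmx0 scaler0 addr0.
Qed.
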